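(* Let $G_0$ be a connected graph with a vertex $x$ such that $d_{G_0}(x)\in\{1,2\}$. Let $P_1=u_1u_2\cdots u_k$ ($k\ge1$) and $P_2=v_1v_2\cdots v_l$ ($l\ge1$) be paths, vertex-disjoint from each other and from $G_0$. Let $G_1$ be the graph obtained from the disjoint union of $G_0,P_1,P_2$ by adding the edges $u_1x$ and $v_1x$, and let $G_2=G_1-u_1x+u_1v_l$. Then $SO(G_1)>SO(G_2)$ and $SO_{red}(G_1)>SO_{red}(G_2)$.
   Context: $d_G(u)$ denotes the degree of $u$ in $G$. $SO(G)=\sum_{uv\in E(G)}\sqrt{d_G(u)^2+d_G(v)^2}$ and $SO_{red}(G)=\sum_{uv\in E(G)}\sqrt{(d_G(u)-1)^2+(d_G(v)-1)^2}$. *)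

(* Defs.v *)
From HB Require Import structures.
From mathcomp Require Import all_boot all_order all_algebra.
Set Implicit Arguments. Unset Strict Implicit. Unset Printing Implicit Defensive.
Import Order.TTheory GRing.Theory Num.Theory.
Local Open Scope ring_scope.

(* Simple graphs: a relation e : rel T on a finType T (assumed symmetric,
   irreflexive where needed). *)

Definition deg (T : finType) (e : rel T) (u : T) : nat := #|[pred v | e u v]|.

(* Sum over unordered edges = half the sum over ordered adjacent pairs. *)
Definition SO (R : rcfType) (T : finType) (e : rel T) : R :=
  (\sum_(u : T) \sum_(v : T | e u v)
      Num.sqrt ((deg e u)%:R ^+ 2 + (deg e v)%:R ^+ 2)) / 2%:R.

Definition SOred (R : rcfType) (T : finType) (e : rel T) : R :=
  (\sum_(u : T) \sum_(v : T | e u v)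
      Num.sqrt (((deg e u)%:R - 1) ^+ 2 + ((deg e v)%:R - 1) ^+ 2)) / 2%:R.

Definition path_adj (n : nat) (i j : 'I_n) : bool :=
  (i.+1 == j :> nat) || (j.+1 == i :> nat).

(* G1: vertices V + ('I_k + 'I_l); inl = G0, inr (inl i) = u_{i+1} of P1,
   inr (inr j) = v_{j+1} of P2; extra edges u_1 x and v_1 x. *)
Definition G1rel (V : finType) (e : rel V) (x : V) (k l : nat)
  : rel (V + ('I_k + 'I_l)) := fun a b =>
  match a, b with
  | inl a, inl b => e a b
  | inr (inl i), inr (inl j) => path_adj i j
  | inr (inr i), inr (inr j) => path_adj i j
  | inl a, inr (inl i) => (a == x) && (i == 0%N :> nat)
  | inr (inl i), inl a => (a == x) && (i == 0%N :> nat)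
  | inl a, inr (inr j) => (a == x) && (j == 0%N :> nat)
  | inr (inr j), inl a => (a == x) && (j == 0%N :> nat)
  | inr (inl _), inr (inr _) => false
  | inr (inr _), inr (inl _) => false
  end.

(* G2 = G1 - u_1 x + u_1 v_l *)
Definition G2rel (V : finType) (e : rel V) (x : V) (k l : nat)
  : rel (V + ('I_k + 'I_l)) := fun a b =>
  match a, b with
  | inl a, inl b => e a b
  | inr (inl i), inr (inl j) => path_adj i j
  | inr (inr i), inr (inr j) => path_adj i j
  | inl _, inr (inl _) => false
  | inr (inl _), inl _ => false
  | inl a, inr (inr j) => (a == x) && (j == 0%N :> nat)
  | inr (inr j), inl a => (a == x) && (j == 0%N :> nat)
  | inr (inl i), inr (inr j) => (i == 0%N :> nat) && (j == l.-1 :> nat)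
  | inr (inr j), inr (inl i) => (i == 0%N :> nat) && (j == l.-1 :> nat)
  end.

(* Main.v *)
Require Import Defs.
From HB Require Import structures.
From mathcomp Require Import all_boot all_order all_algebra.
From mathcomp Require Import lra zify.
Import Order.TTheory GRing.Theory Num.Theory.
Local Open Scope ring_scope.

Lemma eq_ll (A B : eqType) (a b : A) : ((inl a : A + B) == inl b) = (a == b). Proof. by []. Qed.
Lemma eq_lr (A B : eqType) (a : A) (b : B) : ((inl a : A + B) == inr b) = false. Proof. by []. Qed.
Lemma eq_rl (A B : eqType) (a : A) (b : B) : ((inr b : A + B) == inl a) = false. Proof. by []. Qed.
Lemma eq_rr (A B : eqType) (a b : B) : ((inr a : A + B) == inr b) = (a == b). Proof. by []. Qed.

Lemma deg_sum (T : finType) (G : rel T) u : deg G u = (\sum_v (G u v : nat))%N.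
Proof.
rewrite /deg -sum1_card big_mkcond /=; apply: eq_bigr => v _.
by rewrite inE; case: (G u v).
Qed.

Lemma deg_pos (T : finType) (G : rel T) u v : G u v -> (0 < deg G u)%N.
Proof. by move=> h; rewrite /deg; apply/card_gt0P; exists v. Qed.

Lemma sum_pred1n (A : finType) (a0 : A) (P : pred A) :
  (forall a, P a = (a == a0)) -> (\sum_a (P a : nat) = 1)%N.
Proof.
move=> HP; rewrite (bigD1 a0) // HP eqxx /= big1 // => a.
by rewrite HP => /negbTE ->.
Qed.

Lemma sum_ord_eq n m : (\sum_(i < n) (nat_of_ord i == m : nat) = (m < n))%N.
Proof.
case: (ltnP m n) => h.
  rewrite (@sum_pred1n _ (Ordinal h) (fun i : 'I_n => nat_of_ord i == m)) // => i; by rewrite -val_eqE.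
rewrite big1 // => i _.
by have -> : (nat_of_ord i == m) = false by apply/negbTE; rewrite neq_ltn (leq_trans (ltn_ord i) h).
Qed.

Lemma sum_and_l (A : finType) (c : bool) (P : pred A) :
  (\sum_a (c && P a : nat) = c * \sum_a (P a : nat))%N.
Proof. by case: c; [rewrite mul1n | rewrite mul0n big1]. Qed.

Lemma sum_and_r (A : finType) (c : bool) (P : pred A) :
  (\sum_a (P a && c : nat) = c * \sum_a (P a : nat))%N.
Proof. rewrite -sum_and_l; apply: eq_bigr => a _; by rewrite andbC. Qed.

Lemma sum_false (A : finType) : (\sum_(a : A) (false : nat) = 0)%N.
Proof. by rewrite big1. Qed.

Lemma pdeg n (i : 'I_n) :
  (\sum_(j < n) (path_adj i j : nat) = (i.+1 < n) + (0 < i))%N.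
Proof.
rewrite /path_adj.
have -> : (\sum_(j < n) ((i.+1 == j) || (j.+1 == i) : nat) =
   \sum_(j < n) (nat_of_ord j == i.+1 : nat) + \sum_(j < n) ((nat_of_ord j).+1 == i : nat))%N.
  rewrite -big_split /=; apply: eq_bigr => j _.
  rewrite (eq_sym (i.+1)).
  by case: (nat_of_ord j =P i.+1); case: ((nat_of_ord j).+1 =P i) => //= ; lia.
rewrite sum_ord_eq; congr (_ + _)%N.
case: i => [[|i] hi] /=.
  by rewrite big1.
rewrite (eq_bigr (fun j : 'I_n => (nat_of_ord j == i : nat))); last by move=> j _; rewrite eqSS.
rewrite sum_ord_eq; apply/eqP; rewrite eqb1; lia.
Qed.

Lemma sum_eqx (A : finType) (a0 : A) : (\sum_(a : A) (a == a0 : nat) = 1)%N.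
Proof. exact: (@sum_pred1n _ a0 (fun a => a == a0)). Qed.

Definition Fp {R : rcfType} {T : finType} (G : rel T) (h : nat -> nat -> R) u v : R :=
  if G u v then h (deg G u) (deg G v) else 0.
Definition ind {R : rcfType} {T : eqType} (u v p q : T) : R := if (u == p) && (v == q) then 1 else 0.

Section D.
Variables (V : finType) (e : rel V) (x : V) (k l : nat) (hk : (0<k)%N) (hl : (0<l)%N).
Let G1 := @G1rel V e x k l.
Let G2 := @G2rel V e x k l.
Lemma hl1 : (l.-1 < l)%N. Proof. lia. Qed.

Lemma dG1l a : deg G1 (inl a) = (deg e a + (a==x) + (a==x))%N.
Proof.
rewrite deg_sum big_sumType /= big_sumType /= -deg_sum !sum_and_l !sum_ord_eq hk hl; lia.
Qed.
Lemma dG2l a : deg G2 (inl a) = (deg e a + (a==x))%N.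
Proof.
rewrite deg_sum big_sumType /= big_sumType /= -deg_sum !sum_and_l !sum_ord_eq sum_false hl; lia.
Qed.
Lemma dG1u (i : 'I_k) : deg G1 (inr (inl i)) = ((nat_of_ord i == 0) + (i.+1 < k) + (0 < i))%N.
Proof.
rewrite deg_sum big_sumType /= big_sumType /= sum_and_r sum_eqx pdeg sum_false; lia.
Qed.
Lemma dG2u (i : 'I_k) : deg G2 (inr (inl i)) = ((nat_of_ord i == 0) + (i.+1 < k) + (0 < i))%N.
Proof.
rewrite deg_sum big_sumType /= big_sumType /= sum_false pdeg sum_and_l sum_ord_eq hl1; lia.
Qed.
Lemma dG1v (j : 'I_l) : deg G1 (inr (inr j)) = ((nat_of_ord j == 0) + (j.+1 < l) + (0 < j))%N.
Proof.
rewrite deg_sum big_sumType /= big_sumType /= sum_and_r sum_eqx pdeg sum_false; lia.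
Qed.
Lemma dG2v (j : 'I_l) : deg G2 (inr (inr j)) = ((nat_of_ord j == 0) + (j.+1 < l) + (0 < j) + (nat_of_ord j == l.-1))%N.
Proof.
rewrite deg_sum big_sumType /= big_sumType /= sum_and_r sum_eqx pdeg sum_and_r sum_ord_eq hk; lia.
Qed.
Lemma hl2 : (l.-2 < l)%N. Proof. lia. Qed.
Definition o0k : 'I_k := Ordinal hk.
Definition o0l : 'I_l := Ordinal hl.
Definition oL : 'I_l := Ordinal hl1.
Definition oL1 : 'I_l := Ordinal hl2.
Definition X : (V + ('I_k + 'I_l))%type := inl x.
Definition U1 : (V + ('I_k + 'I_l))%type := inr (inl o0k).
Definition V0 : (V + ('I_k + 'I_l))%type := inr (inr o0l).
Definition VL : (V + ('I_k + 'I_l))%type := inr (inr oL).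
Definition VL1 : (V + ('I_k + 'I_l))%type := inr (inr oL1).

Lemma dX1 : deg G1 X = (deg e x).+2. Proof. rewrite dG1l eqxx; lia. Qed.
Lemma dX2 : deg G2 X = (deg e x).+1. Proof. rewrite dG2l eqxx; lia. Qed.
Lemma dU1_1 : deg G1 U1 = (1 < k : nat).+1. Proof. rewrite dG1u /=; lia. Qed.
Lemma dU1_2 : deg G2 U1 = (1 < k : nat).+1. Proof. rewrite dG2u /=; lia. Qed.
Lemma dV0_1 : deg G1 V0 = (1 < l : nat).+1. Proof. rewrite dG1v /=; lia. Qed.
Lemma dV0_2 : deg G2 V0 = 2%N. Proof. rewrite dG2v /=. case: l hl => [|[|n]] //=. Qed.
Lemma dVL_1 : deg G1 VL = 1%N. Proof. rewrite dG1v /=. case: l hl => [|[|n]] //= _; rewrite ltnn; lia. Qed.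
Lemma dVL_2 : deg G2 VL = 2%N. Proof. rewrite dG2v /=. case: l hl => [|[|n]] //= _; rewrite ltnn eqxx; lia. Qed.
Lemma dVL1_1 : (1 < l)%N -> deg G1 VL1 = 2%N. Proof. rewrite dG1v /=. case: l hl => [|[|[|n]]] //= _ _; rewrite ?ltnSn; lia. Qed.
Lemma dVL1_2 : (1 < l)%N -> deg G2 VL1 = 2%N. Proof. rewrite dG2v /=. case: l hl => [|[|[|n]]] //= _ _; rewrite ?ltnSn; lia. Qed.
Lemma eqU i : deg G1 (inr (inl i)) = deg G2 (inr (inl i)). Proof. by rewrite dG1u dG2u. Qed.
Lemma eqV j : j != oL -> deg G1 (inr (inr j)) = deg G2 (inr (inr j)).
Proof. move=> h; rewrite dG1v dG2v; have -> : (nat_of_ord j == l.-1) = false by apply/negbTE; rewrite -val_eqE in h. by rewrite addn0. Qed.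

Variables (R : rcfType) (h : nat -> nat -> R).
Hypothesis hmono : forall a a' b b', (0 < a)%N -> (a <= a')%N -> (0 < b)%N -> (b <= b')%N -> h a b <= h a' b'.

Definition bk : nat := (1 < k : nat).+1.
Definition p0 : nat := (1 < l : nat).+1.
Definition dx : nat := deg e x.
Definition c4 : R := if (1 < l)%N then h 1 2 - h 2 2 else 0.
Definition c4' : R := if (1 < l)%N then h 2 1 - h 2 2 else 0.
Definition L : seq ((V + ('I_k + 'I_l)) * (V + ('I_k + 'I_l)) * R) :=
  [:: (X, U1, h dx.+2 bk); (U1, X, h bk dx.+2);
      (X, V0, h dx.+2 p0 - h dx.+1 2); (V0, X, h p0 dx.+2 - h 2 dx.+1);
      (U1, VL, - h bk 2); (VL, U1, - h 2 bk); (VL, VL1, c4); (VL1, VL, c4')].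

Lemma e0k (i : 'I_k) : (nat_of_ord i == 0%N) = (i == o0k). Proof. by rewrite -val_eqE. Qed.
Lemma e0l (i : 'I_l) : (nat_of_ord i == 0%N) = (i == o0l). Proof. by rewrite -val_eqE. Qed.
Lemma eLl (i : 'I_l) : (nat_of_ord i == l.-1) = (i == oL). Proof. by rewrite -val_eqE. Qed.

Hypothesis e_sym : symmetric e.

Lemma padj_irr n (i : 'I_n) : path_adj i i = false.
Proof. apply/negbTE; rewrite /path_adj negb_or; apply/andP; split; apply/eqP; lia. Qed.

Lemma pointwise u v :
  \sum_(t <- L) ind u v t.1.1 t.1.2 * t.2 <= Fp G1 h u v - Fp G2 h u v.
Proof.
rewrite /L !big_cons big_nil /ind /Fp /X /U1 /V0 /VL /VL1.
case: u => [a|[i|i]]; case: v => [b|[j|j]];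
  rewrite ?eq_ll ?eq_lr ?eq_rl ?eq_rr ?eq_ll ?eq_lr ?eq_rl ?eq_rr /=;
  rewrite ?andbF ?andbT ?e0k ?e0l ?eLl /=.
- case E: (e a b); last lra.
  have : h (deg G2 (inl a)) (deg G2 (inl b)) <= h (deg G1 (inl a)) (deg G1 (inl b)).
    have ha := @deg_pos _ e a b E. have hb : (0 < deg e b)%N by apply: (@deg_pos _ e b a); rewrite e_sym.
    apply: hmono; rewrite ?dG1l ?dG2l; lia.
  lra.
- case: (a =P x) => [->|_]; case: (j =P o0k) => [->|_] /=; rewrite ?andbF ?andbT ?eqxx /=; try lra.
  rewrite dX1 dU1_1; lra.
- case: (a =P x) => [->|_]; case: (j =P o0l) => [->|_] /=; rewrite ?andbF ?andbT ?eqxx /=; try lra.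
  rewrite dX1 dX2 dV0_1 dV0_2; lra.
- case: (b =P x) => [->|_]; case: (i =P o0k) => [->|_] /=; rewrite ?andbF ?andbT ?eqxx /=; try lra.
  rewrite dX1 dU1_1; lra.
- rewrite !eqU; case: (path_adj i j); lra.
- case: (i =P o0k) => [->|_]; case: (j =P oL) => [->|_] /=; rewrite ?andbF ?andbT ?eqxx /=; try lra.
  rewrite dU1_2 dVL_2; lra.
- case: (b =P x) => [->|_]; case: (i =P o0l) => [->|_] /=; rewrite ?andbF ?andbT ?eqxx /=; try lra.
  rewrite dX1 dX2 dV0_1 dV0_2; lra.
- case: (i =P oL) => [->|_]; case: (j =P o0k) => [->|_] /=; rewrite ?andbF ?andbT ?eqxx /=; try lra.
  rewrite dU1_2 dVL_2; lra.
- case: (i =P oL) => [->|ni]; case: (j =P oL) => [->|nj]; rewrite ?andbF ?andbT ?eqxx /=.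
  + rewrite padj_irr /c4 /c4'.
    case: (ltnP 1 l) => hl2'.
      have ne1 : (oL == oL1) = false by apply/negbTE; rewrite -val_eqE /=; apply/eqP; lia.
      have ne2 : (oL1 == oL) = false by apply/negbTE; rewrite -val_eqE /=; apply/eqP; lia.
      rewrite ?ne1 ?ne2 /=; by rewrite !mul0r !add0r oppr0.
    case: (oL == oL1); case: (oL1 == oL); lra.
  + case: (j =P oL1) => [ej|nj1]; [subst j|]; rewrite ?andbF ?andbT ?eqxx /=.
      have hl2' : (1 < l)%N.
        case: (ltnP 1 l) => // hle; exfalso; apply: nj; apply: val_inj => /=. lia.
      have -> : path_adj oL oL1 by rewrite /path_adj /=; apply/orP; right; apply/eqP; lia.
      rewrite dVL_1 dVL_2 (dVL1_1 hl2') (dVL1_2 hl2') /c4 hl2'; lra.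
    have -> : path_adj oL j = false.
      apply/negbTE; rewrite /path_adj negb_or; apply/andP; split; apply/eqP => /= hh.
        have := ltn_ord j; lia.
      apply: nj1; apply: val_inj => /=; lia.
    lra.
  + case: (i =P oL1) => [ei|ni1]; [subst i|]; rewrite ?andbF ?andbT ?eqxx /=.
      have hl2' : (1 < l)%N.
        case: (ltnP 1 l) => // hle; exfalso; apply: ni; apply: val_inj => /=; lia.
      have -> : path_adj oL1 oL by rewrite /path_adj /=; apply/orP; left; apply/eqP; lia.
      rewrite dVL_1 dVL_2 (dVL1_1 hl2') (dVL1_2 hl2') /c4' hl2'; lra.
    have -> : path_adj i oL = false.
      apply/negbTE; rewrite /path_adj negb_or; apply/andP; split; apply/eqP => /= hh.
        apply: ni1; apply: val_inj => /=; lia.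
      have := ltn_ord i; lia.
    lra.
  + have ni' : i != oL by apply/eqP.
    have nj' : j != oL by apply/eqP.
    rewrite (eqV i ni') (eqV j nj'); case: (path_adj i j); lra.
Qed.

Lemma sum_ind (T : finType) (p q : T) (c : R) :
  \sum_(u : T) \sum_(v : T) ind u v p q * c = c.
Proof.
have H u : \sum_(v : T) ind u v p q * c = if u == p then c else 0.
  rewrite /ind; case: (u == p) => /=; last by rewrite big1 // => v _; rewrite mul0r.
  rewrite (bigD1 q) //= eqxx mul1r big1 ?addr0 // => v /negbTE ->; by rewrite mul0r.
under eq_bigr do rewrite H.
by rewrite -big_mkcond big_pred1_eq.
Qed.

Lemma gen_bound :
  \sum_(t <- L) t.2 <= \sum_u \sum_v Fp G1 h u v - \sum_u \sum_v Fp G2 h u v.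
Proof.
rewrite -sumrB.
under [X in _ <= X]eq_bigr do rewrite -sumrB.
have -> : \sum_(t <- L) t.2 = \sum_u \sum_v \sum_(t <- L) ind u v t.1.1 t.1.2 * t.2.
  under [X in _ = X]eq_bigr do rewrite exchange_big.
  rewrite exchange_big; apply: eq_bigr => t _; by rewrite sum_ind.
apply: ler_sum => u _; apply: ler_sum => v _; exact: pointwise.
Qed.
End D.

Definition hso {R : rcfType} (a b : nat) : R := Num.sqrt ((a%:R)^+2 + (b%:R)^+2).
Definition hred {R : rcfType} (a b : nat) : R := Num.sqrt ((a%:R - 1)^+2 + (b%:R - 1)^+2).

Lemma SO_Fp (R : rcfType) (T : finType) (G : rel T) :
  SO R G = (\sum_u \sum_v Fp G (@hso R) u v) / 2%:R.
Proof. rewrite /SO; congr (_ / _); apply: eq_bigr => u _; by rewrite big_mkcond. Qed.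

Lemma SOred_Fp (R : rcfType) (T : finType) (G : rel T) :
  SOred R G = (\sum_u \sum_v Fp G (@hred R) u v) / 2%:R.
Proof. rewrite /SOred; congr (_ / _); apply: eq_bigr => u _; by rewrite big_mkcond. Qed.

Lemma hso_mono (R : rcfType) a a' b b' : (a <= a')%N -> (b <= b')%N -> @hso R a b <= hso a' b'.
Proof.
move=> ha hb; rewrite /hso ler_sqrt; last by rewrite addr_ge0 // sqr_ge0.
rewrite -!natrX -!natrD ler_nat leq_add // leq_exp2r //.
Qed.

Lemma hred_eq (R : rcfType) a b : (0 < a)%N -> (0 < b)%N -> @hred R a b = hso a.-1 b.-1.
Proof.
move=> ha hb; rewrite /hred /hso.
by rewrite -{1}(prednK ha) -{1}(prednK hb) -!natr1 !addrK.
Qed.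

Lemma hso_nat (R : rcfType) a b : @hso R a b = Num.sqrt ((a * a + b * b)%N%:R).
Proof. by rewrite /hso natrD !natrM !expr2. Qed.

Lemma sqrt_lb (R : rcfType) (a v : R) : 0 <= a -> a * a <= v -> a <= Num.sqrt v.
Proof.
move=> ha hv; rewrite -{1}(ger0_norm ha) -sqrtr_sqr ler_sqrt ?expr2 //.
by apply: le_trans hv; rewrite mulr_ge0.
Qed.

Lemma sqrt_ub (R : rcfType) (a v : R) : 0 <= a -> 0 <= v -> v <= a * a -> Num.sqrt v <= a.
Proof.
move=> ha hv0 hv; rewrite -(ger0_norm ha) -sqrtr_sqr ler_sqrt ?expr2 //.
by rewrite mulr_ge0.
Qed.

Lemma sqrt_lbN (R : rcfType) (n m : nat) : (m * m <= n * 400)%N ->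
  (m%:R / 20%:R : R) <= Num.sqrt (n%:R).
Proof.
move=> h; apply: sqrt_lb; first by rewrite divr_ge0 ?ler0n.
rewrite mulrACA -invfM -!natrM ler_pdivrMr ?ltr0n // -natrM ler_nat.
by rewrite (_ : (20 * 20 = 400)%N).
Qed.

Lemma sqrt_ubN (R : rcfType) (n m : nat) : (n * 400 <= m * m)%N ->
  Num.sqrt (n%:R) <= (m%:R / 20%:R : R).
Proof.
move=> h; apply: sqrt_ub; first by rewrite divr_ge0 ?ler0n.
  by rewrite ler0n.
rewrite mulrACA -invfM -!natrM ler_pdivlMr ?ltr0n // -natrM ler_nat.
by rewrite (_ : (20 * 20 = 400)%N).
Qed.

Ltac isq n := lazymatch n with
  | 0%N => constr:(0%N)
  | 1%N => constr:(20%N)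
  | 2%N => constr:(28%N)
  | 3%N => constr:(34%N)
  | 4%N => constr:(40%N)
  | 5%N => constr:(44%N)
  | 6%N => constr:(48%N)
  | 7%N => constr:(52%N)
  | 8%N => constr:(56%N)
  | 9%N => constr:(60%N)
  | 10%N => constr:(63%N)
  | 11%N => constr:(66%N)
  | 12%N => constr:(69%N)
  | 13%N => constr:(72%N)
  | 14%N => constr:(74%N)
  | 15%N => constr:(77%N)
  | 16%N => constr:(80%N)
  | 17%N => constr:(82%N)
  | 18%N => constr:(84%N)
  | 19%N => constr:(87%N)
  | 20%N => constr:(89%N)
  | 21%N => constr:(91%N)
  | 22%N => constr:(93%N)
  | 23%N => constr:(95%N)
  | 24%N => constr:(97%N)
  | 25%N => constr:(100%N)
  | 26%N => constr:(101%N)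
  | 27%N => constr:(103%N)
  | 28%N => constr:(105%N)
  | 29%N => constr:(107%N)
  | 30%N => constr:(109%N)
  | 31%N => constr:(111%N)
  | 32%N => constr:(113%N)
  | 33%N => constr:(114%N)
  | 34%N => constr:(116%N)
  | 35%N => constr:(118%N)
  | 36%N => constr:(120%N)
  | 37%N => constr:(121%N)
  | 38%N => constr:(123%N)
  | 39%N => constr:(124%N)
  | 40%N => constr:(126%N)
end.

Ltac bnd := repeat match goal with
  | |- context [@Num.Def.sqrtr ?Rc ?t] =>
    lazymatch t with ?n%:R =>
    let RR := type of t in
    let v := eval vm_compute in n in
    let m := isq v in let m1 := eval vm_compute in m.+1 in
    change n with v;
    have := @sqrt_lbN Rc v m ltac:(by vm_compute);
    have := @sqrt_ubN Rc v m1 ltac:(by vm_compute);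
    generalize (Num.sqrt (v%:R : RR)); intros
    end
  end.

Theorem lemma2p3 (R : rcfType) (V : finType) (e : rel V) (x : V) (k l : nat)
  (e_sym : symmetric e) (e_irr : irreflexive e)
  (e_conn : forall a b : V, connect e a b)
  (hx : (deg e x == 1%N) || (deg e x == 2%N))
  (hk : (0 < k)%N) (hl : (0 < l)%N) :
  SO R (@G2rel V e x k l) < SO R (@G1rel V e x k l) /\
  SOred R (@G2rel V e x k l) < SOred R (@G1rel V e x k l).
Proof.
have hdx : deg e x = 1%N \/ deg e x = 2%N by case/orP: hx => /eqP; auto.
split.
- rewrite !SO_Fp.
  have B := @gen_bound V e x k l hk hl R (@hso R) (fun a a' b b' _ h1 _ h2 => @hso_mono R a a' b b' h1 h2) e_sym.
  have P : 0 < \sum_(t <- L V e x k l hk hl R (@hso R)) t.2.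
    rewrite /L !big_cons big_nil /= /dx /bk /p0 /c4 /c4'.
    case: hdx => ->; case: (1 < k)%N; case: (1 < l)%N => /=; rewrite !hso_nat; bnd; lra.
  lra.
- rewrite !SOred_Fp.
  have hm : forall a a' b b', (0 < a)%N -> (a <= a')%N -> (0 < b)%N -> (b <= b')%N -> @hred R a b <= hred a' b'.
    move=> a a' b b' ha haa hb hbb; rewrite !hred_eq //; try lia.
    apply: hso_mono; lia.
  have B := @gen_bound V e x k l hk hl R (@hred R) hm e_sym.
  have P : 0 < \sum_(t <- L V e x k l hk hl R (@hred R)) t.2.
    rewrite /L !big_cons big_nil /= /dx /bk /p0 /c4 /c4'.
    case: hdx => ->; case: (1 < k)%N; case: (1 < l)%N => /=; rewrite !hred_eq // !hso_nat; bnd; lra.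
  lra.
Qed.
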